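(* Let $\mathfrak L$ be a complete lattice, $f:\mathfrak L\to\mathfrak L$ monotone, write $\nu^\alpha$ for $\nu^\alpha f$, let $\phi:\mathcal O\to\mathcal O$ and let $\lambda\in\mathcal O$ be a nonzero limit ordinal. Then $\limsup_{\alpha\to\lambda}\nu^{\phi(\alpha)}=\nu^{\liminf_\lambda\phi}$.
   Context: $\mathcal O$ is the set of ordinals $\le\top_{\mathsf{ord}}$ for a fixed ordinal $\top_{\mathsf{ord}}$ ($=\beth_\omega$), a complete lattice. For $g:\mathcal O\to\mathfrak L$ into a complete lattice: $\liminf_\lambda g=\liminf_{\alpha\to\lambda}g(\alpha)=\sup_{\alpha_0<\lambda}\inf_{\alpha_0\le\alpha<\lambda}g(\alpha)$, $\limsup_{\alpha\to\lambda}g(\alpha)=\inf_{\alpha_0<\lambda}\sup_{\alpha_0\le\alpha<\lambda}g(\alpha)$. For $f:\mathfrak L\to\mathfrak L$ and $g\in\mathfrak L$: $f^0(g)=g$, $f^{\alpha+1}(g)=f(f^\alpha(g))$, $f^\lambda(g)=\limsup_{\alpha\to\lambda}f^\alpha(g)$; $\nu^\alpha f:=f^\alpha(\top)$. *)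

(* Defs.v *)
From Stdlib Require Import Classical ClassicalEpsilon.

Record complete_lattice := CompleteLattice {
  cl_car :> Type;
  cl_le : cl_car -> cl_car -> Prop;
  cl_le_refl : forall x, cl_le x x;
  cl_le_trans : forall x y z, cl_le x y -> cl_le y z -> cl_le x z;
  cl_le_antisym : forall x y, cl_le x y -> cl_le y x -> x = y;
  cl_sup : (cl_car -> Prop) -> cl_car;
  cl_sup_ub : forall (A : cl_car -> Prop) x, A x -> cl_le x (cl_sup A);
  cl_sup_least : forall (A : cl_car -> Prop) y,
      (forall x, A x -> cl_le x y) -> cl_le (cl_sup A) y;
  cl_inf : (cl_car -> Prop) -> cl_car;
  cl_inf_lb : forall (A : cl_car -> Prop) x, A x -> cl_le (cl_inf A) x;
  cl_inf_greatest : forall (A : cl_car -> Prop) y,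
      (forall x, A x -> cl_le y x) -> cl_le y (cl_inf A)
}.
Arguments cl_le {c}.
Arguments cl_sup {c}.
Arguments cl_inf {c}.

Definition cl_top (L : complete_lattice) : L := cl_sup (fun _ : L => True).
Definition cl_bot (L : complete_lattice) : L := cl_sup (fun _ : L => False).

Definition cl_lt {L : complete_lattice} (x y : L) : Prop := cl_le x y /\ x <> y.

Definition monotone {L : complete_lattice} (f : L -> L) : Prop :=
  forall x y, cl_le x y -> cl_le (f x) (f y).

(* An initial segment [0, top_ord] of the ordinals: a complete lattice whose
   order is total and well-founded (i.e. a well-order with a largest element).
   Every ordinal top_ord gives one, and every such structure is order-isomorphic
   to [0, top_ord] for a unique ordinal top_ord. *)
Record ordinal_segment := OrdinalSegment {
  os_lat :> complete_lattice;
  os_total : forall x y : os_lat, cl_le x y \/ cl_le y x;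
  os_wf : well_founded (@cl_lt os_lat)
}.

Definition is_succ_of {O : ordinal_segment} (beta alpha : O) : Prop :=
  cl_lt alpha beta /\ forall gamma : O, cl_lt alpha gamma -> cl_le beta gamma.

Definition is_limit {O : ordinal_segment} (lam : O) : Prop :=
  lam <> cl_bot O /\ ~ (exists alpha : O, is_succ_of lam alpha).

Definition supf {O : ordinal_segment} {L : complete_lattice}
  (P : O -> Prop) (g : O -> L) : L :=
  cl_sup (fun y => exists alpha, P alpha /\ y = g alpha).
Definition inff {O : ordinal_segment} {L : complete_lattice}
  (P : O -> Prop) (g : O -> L) : L :=
  cl_inf (fun y => exists alpha, P alpha /\ y = g alpha).

Definition liminf {O : ordinal_segment} {L : complete_lattice}
  (g : O -> L) (lam : O) : L :=
  supf (fun a0 => cl_lt a0 lam)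
    (fun a0 => inff (fun alpha => cl_le a0 alpha /\ cl_lt alpha lam) g).

Definition limsup {O : ordinal_segment} {L : complete_lattice}
  (g : O -> L) (lam : O) : L :=
  inff (fun a0 => cl_lt a0 lam)
    (fun a0 => supf (fun alpha => cl_le a0 alpha /\ cl_lt alpha lam) g).

(* One step of the transfinite recursion:
   f^0 g = g, f^(alpha+1) g = f (f^alpha g),
   f^lam g = limsup_{alpha -> lam} f^alpha g  for lam a (nonzero) limit. *)
Definition iter_step {O : ordinal_segment} {L : complete_lattice}
  (f : L -> L) (g : L) (beta : O) (rec : forall alpha : O, cl_lt alpha beta -> L) : L :=
  match excluded_middle_informative (beta = cl_bot O) with
  | left _ => g
  | right _ =>
    match excluded_middle_informative (exists alpha, is_succ_of beta alpha) with
    | left H =>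
        let (alpha, Ha) := constructive_indefinite_description _ H in
        f (rec alpha (proj1 Ha))
    | right _ =>
        cl_inf (fun y => exists a0, cl_lt a0 beta /\
          y = cl_sup (fun z => exists alpha (h : cl_lt alpha beta),
                         cl_le a0 alpha /\ z = rec alpha h))
    end
  end.

Definition iter_ord {O : ordinal_segment} {L : complete_lattice}
  (f : L -> L) (g : L) : O -> L :=
  Fix (os_wf O) (fun _ => cl_car L) (iter_step f g).

Definition nu {O : ordinal_segment} {L : complete_lattice} (f : L -> L) (alpha : O) : L :=
  iter_ord f (cl_top L) alpha.

(* Main.v *)
Require Import Defs.
From Stdlib Require Import Classical ClassicalEpsilon FunctionalExtensionality.

Section Aux.
Variable O : ordinal_segment.

Lemma bot_le (L : complete_lattice) (x : L) : cl_le (cl_bot L) x.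
Proof. unfold cl_bot. apply cl_sup_least. intros _ []. Qed.

Lemma top_ge (L : complete_lattice) (x : L) : cl_le x (cl_top L).
Proof. unfold cl_top. apply cl_sup_ub. exact I. Qed.

Lemma lt_le (a b : O) : cl_lt a b -> cl_le a b.
Proof. intros [h _]; exact h. Qed.

Lemma lt_not_le (a b : O) : cl_lt a b -> ~ cl_le b a.
Proof. intros [h1 h2] h3. apply h2. apply cl_le_antisym; auto. Qed.

Lemma not_le_lt (a b : O) : ~ cl_le b a -> cl_lt a b.
Proof.
  intros h. destruct (os_total O a b) as [h1|h1].
  - split; auto. intros ->. apply h, cl_le_refl.
  - contradiction.
Qed.

Lemma wf_min (P : O -> Prop) x : P x -> exists m, P m /\ forall y, P y -> cl_le m y.
Proof.
  induction x as [x IH] using (well_founded_ind (os_wf O)). intros Px.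
  destruct (classic (forall y, P y -> cl_le x y)) as [h|h].
  - exists x; auto.
  - apply not_all_ex_not in h. destruct h as [y hy].
    apply imply_to_and in hy. destruct hy as [Py hy].
    apply (IH y); auto. apply not_le_lt; auto.
Qed.

Lemma trich (x : O) : x = cl_bot O \/ (exists p, is_succ_of x p) \/ is_limit x.
Proof.
  destruct (classic (x = cl_bot O)) as [h|h]; auto.
  destruct (classic (exists p, is_succ_of x p)) as [h'|h']; auto.
  right; right; split; auto.
Qed.

Variable L : complete_lattice.
Variable f : L -> L.
Hypothesis hf : monotone f.

Lemma iter_eq (g : L) (b : O) :
  @iter_ord O L f g b = iter_step f g b (fun a _ => iter_ord f g a).
Proof.
  unfold iter_ord. apply (Fix_eq (os_wf O) (fun _ => cl_car L) (iter_step f g)). intros x F G H.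
  assert (F = G) as E by (extensionality y; extensionality p; apply H).
  subst; reflexivity.
Qed.

Lemma nu_bot : @nu O L f (cl_bot O) = cl_top L.
Proof.
  unfold nu. rewrite iter_eq. unfold iter_step.
  destruct (excluded_middle_informative _) as [h|h]; [reflexivity|].
  exfalso; apply h; reflexivity.
Qed.

Lemma nu_succ (b a : O) : is_succ_of b a -> nu f b = f (nu f a).
Proof.
  intros hs. unfold nu at 1. rewrite iter_eq. unfold iter_step.
  destruct (excluded_middle_informative _) as [h|h].
  - exfalso. destruct hs as [[h1 h2] _]. apply h2. subst b.
    apply cl_le_antisym; auto. apply bot_le.
  - destruct (excluded_middle_informative _) as [h'|h'].
    + destruct (constructive_indefinite_description _ h') as [a' ha'].
      assert (a' = a) as ->; [|reflexivity].
      destruct (os_total O a' a) as [e|e]; apply cl_le_antisym; auto.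
      * destruct (classic (cl_le a a')) as [e'|e']; auto. exfalso.
        apply not_le_lt in e'. apply (proj2 ha') in e'.
        apply (lt_not_le _ _ (proj1 hs)); auto.
      * destruct (classic (cl_le a' a)) as [e'|e']; auto. exfalso.
        apply not_le_lt in e'. apply (proj2 hs) in e'.
        apply (lt_not_le _ _ (proj1 ha')); auto.
    + exfalso; apply h'; exists a; auto.
Qed.

Lemma nu_limit (b : O) : is_limit b ->
  nu f b = cl_inf (fun y => exists a0, cl_lt a0 b /\
          y = cl_sup (fun z => exists alpha (h : cl_lt alpha b),
                         cl_le a0 alpha /\ z = nu f alpha)).
Proof.
  intros [hb hs]. unfold nu at 1. rewrite iter_eq. unfold iter_step.
  destruct (excluded_middle_informative _) as [h|h]; [contradiction|].
  destruct (excluded_middle_informative _) as [h'|h']; [contradiction|].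
  reflexivity.
Qed.

Lemma antitone : forall (b a : O), cl_le a b -> cl_le (nu f b) (nu f a).
Proof.
  intro b; induction b as [b IHb] using (well_founded_ind (os_wf O)).
  intro a; induction a as [a IHa] using (well_founded_ind (os_wf O)).
  intros hab.
  destruct (trich a) as [ha|[[d hd]|ha]].
  - subst a. rewrite nu_bot. apply top_ge.
  - destruct (trich b) as [hb|[[e he]|hb]].
    + exfalso. subst b. destruct hd as [hd _].
      apply (lt_not_le _ _ hd). apply cl_le_trans with (cl_bot O); auto. apply bot_le.
    + rewrite (nu_succ _ _ he), (nu_succ _ _ hd). apply hf. apply IHb.
      * exact (proj1 he).
      * destruct (classic (cl_le d e)) as [x|x]; auto. exfalso.
        apply not_le_lt in x. apply (proj2 he) in x.
        apply (lt_not_le _ _ (proj1 hd)). apply cl_le_trans with b; auto.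
    + assert (hlt : cl_lt a b).
      { split; auto. intros ->. apply (proj2 hb). exists d; auto. }
      rewrite (nu_limit b hb).
      apply cl_le_trans with (cl_sup (fun z => exists alpha (h : cl_lt alpha b),
                         cl_le a alpha /\ z = nu f alpha)).
      * apply cl_inf_lb. exists a; auto.
      * apply cl_sup_least. intros z [x [hx [hax ->]]]. apply IHb; auto.
  - rewrite (nu_limit a ha). apply cl_inf_greatest. intros y [a0 [ha0 ->]].
    apply cl_le_trans with (nu f a0).
    + apply IHa; auto. apply cl_le_trans with a; auto. apply lt_le; auto.
    + apply cl_sup_ub. exists a0, ha0. split; auto. apply cl_le_refl.
Qed.

Lemma limit_inf (mu : O) (y : L) : is_limit mu ->
  (forall b, cl_lt b mu -> cl_le y (nu f b)) -> cl_le y (nu f mu).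
Proof.
  intros hm H. rewrite (nu_limit mu hm). apply cl_inf_greatest.
  intros z [b [hb ->]]. apply cl_le_trans with (nu f b); auto.
  apply cl_sup_ub. exists b, hb. split; auto. apply cl_le_refl.
Qed.

Lemma inf_attained (P : O -> Prop) (phi : O -> O) x : P x ->
  exists a, P a /\ phi a = inff P phi.
Proof.
  intros Px.
  destruct (wf_min (fun y => exists a, P a /\ y = phi a) (phi x)) as [m [[a [Pa ->]] hm]].
  { exists x; auto. }
  exists a; split; auto. unfold inff. apply cl_le_antisym.
  - apply cl_inf_greatest. auto.
  - apply cl_inf_lb. exists a; auto.
Qed.

End Aux.

Theorem corollary4p14 (O : ordinal_segment) (L : complete_lattice) (f : L -> L)
  (hf : monotone f) (phi : O -> O) (lam : O) (hlam : is_limit lam) :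
  limsup (fun alpha => nu f (phi alpha)) lam = nu f (liminf phi lam).
Proof.
  set (m := fun a0 : O => inff (fun alpha => cl_le a0 alpha /\ cl_lt alpha lam) phi).
  assert (Step1 : forall a0, cl_lt a0 lam ->
    supf (fun alpha => cl_le a0 alpha /\ cl_lt alpha lam) (fun alpha => nu f (phi alpha))
    = nu f (m a0)).
  { intros a0 ha0.
    destruct (inf_attained O (fun alpha => cl_le a0 alpha /\ cl_lt alpha lam) phi a0)
      as [s [hs es]].
    { split; auto. apply cl_le_refl. }
    apply cl_le_antisym.
    - apply cl_sup_least. intros z [a [ha ->]]. apply antitone; auto.
      unfold m, inff. apply cl_inf_lb. exists a; auto.
    - unfold m. rewrite <- es. apply cl_sup_ub. exists s; auto. }
  assert (hbot : cl_lt (cl_bot O) lam).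
  { split. apply bot_le. intros e. apply (proj1 hlam). auto. }
  unfold liminf. fold m. unfold limsup.
  set (mu := supf (fun a0 => cl_lt a0 lam) m).
  apply cl_le_antisym.
  - set (A := fun y => exists a0, cl_lt a0 lam /\ y = m a0).
    assert (hmu : mu = cl_sup A) by reflexivity.
    destruct (classic (A mu)) as [hA|hA].
    + destruct hA as [a1 [ha1 e]].
      apply cl_le_trans with (supf (fun alpha => cl_le a1 alpha /\ cl_lt alpha lam)
           (fun alpha => nu f (phi alpha))).
      * apply cl_inf_lb. exists a1; auto.
      * rewrite Step1, e; auto. apply cl_le_refl.
    + assert (bnd : forall b, cl_lt b mu -> exists a, A a /\ ~ cl_le a b).
      { intros b hb. apply NNPP. intros hn. apply (lt_not_le O _ _ hb).
        rewrite hmu. apply cl_sup_least. intros x hx.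
        apply NNPP. intros hx'. apply hn. exists x; auto. }
      assert (hlim : is_limit mu).
      { split.
        - intros e. apply hA. exists (cl_bot O). split; [exact hbot|].
          apply cl_le_antisym.
          + rewrite e. apply bot_le.
          + rewrite hmu. apply cl_sup_ub. exists (cl_bot O); split; [exact hbot|reflexivity].
        - intros [d hd]. destruct (bnd d (proj1 hd)) as [a [ha hna]].
          apply not_le_lt in hna. apply (proj2 hd) in hna.
          apply hA. replace mu with a; auto. apply cl_le_antisym; auto.
          rewrite hmu. apply cl_sup_ub; auto. }
      apply limit_inf; auto. intros b hb.
      destruct (bnd b hb) as [a [[a0 [ha0 ->]] hna]].
      apply cl_le_trans with (nu f (m a0)).
      * rewrite <- Step1; auto. apply cl_inf_lb. exists a0; auto.
      * apply antitone; auto. apply lt_le. apply not_le_lt; auto.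
  - apply cl_inf_greatest. intros y [a0 [ha0 ->]]. rewrite Step1; auto.
    apply antitone; auto. unfold mu, supf. apply cl_sup_ub. exists a0; auto.
Qed.
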